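(* Let $X$ be a linearly ordered set and let $\mathrm{PoisDer}\langle X,d\rangle\cong\mathrm{Pois}\langle d^\omega X\rangle$ be the free differential Poisson algebra. Let $a=x_1x_2\cdots x_t\,[U]$, where $x_1,\dots,x_t\in X$ ($t\ge0$), $U$ is a Lyndon–Shirshov word in the alphabet $d^\omega X$, $[U]$ is its canonical bracketing (a Lie monomial with respect to $\{\cdot,\cdot\}$), and the total number $D([U])$ of applications of $d$ occurring in $U$ equals $t$. Then $a$ belongs to the subalgebra of $\mathrm{PoisDer}\langle X,d\rangle$ generated by $X$ with respect to the operations $[u,v]=\{u,v\}$ and $u\circ v=u\,d(v)$; equivalently, $a$ lies in the image of the GD-algebra homomorphism $\phi\colon\mathrm{GD}\langle X\rangle\to\mathrm{PoisDer}\langle X,d\rangle$ with $\phi(x)=x$, $\phi([u,v])=\{\phi(u),\phi(v)\}$, $\phi(u\circ v)=\phi(u)d(\phi(v))$.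
   Context: A Poisson algebra has an associative commutative product and a Lie bracket $\{\cdot,\cdot\}$ satisfying $\{x,yz\}=\{x,y\}z+y\{x,z\}$; $\mathrm{PoisDer}\langle X,d\rangle$ is the free Poisson algebra generated by $X$ with one derivation $d$ (derivation for both operations), isomorphic to the free Poisson algebra on $d^\omega X=\{d^n(x)\mid n\ge0,x\in X\}$. The letters $d^n(x)$ are ordered lexicographically as pairs $(n,x)$. An associative word $U$ over a linearly ordered alphabet is a Lyndon–Shirshov word if $U>U_2U_1$ lexicographically for every factorization $U=U_1U_2$ into nonempty words; each such word has a canonical bracketing $[U]$, and these form a basis of the free Lie algebra. A GD-algebra is a system $(A,\circ,[\cdot,\cdot])$ with $(A,\circ)$ Novikov ($(a\circ b)\circ c-a\circ(b\circ c)=(b\circ a)\circ c-b\circ(a\circ c)$, $(a\circ b)\circ c=(a\circ c)\circ b$), $(A,[\cdot,\cdot])$ Lie, and $[a,b\circ c]-[c,b\circ a]+[b,a]\circ c-[b,c]\circ a-b\circ[a,c]=0$; $\mathrm{GD}\langle X\rangle$ is the free GD-algebra. *)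

(* Defs.v *)
From HB Require Import structures.
From mathcomp Require Import all_boot all_order all_algebra.
Set Implicit Arguments. Unset Strict Implicit. Unset Printing Implicit Defensive.
Import Order.TTheory GRing.Theory.
Local Open Scope ring_scope.

Section Defs.
Variable K : fieldType.

Definition is_poisson_bracket (A : comAlgType K) (br : A -> A -> A) : Prop :=
  [/\ (forall (c : K) u v w, br (c *: u + v) w = c *: br u w + br v w),
      (forall u v, br u v = - br v u),
      (forall u v w, br u (br v w) + br v (br w u) + br w (br u v) = 0)
    & (forall u v w, br u (v * w) = br u v * w + v * br u w)].

Definition is_poisson_der (A : comAlgType K) (br : A -> A -> A) (d : A -> A) : Prop :=
  [/\ (forall (c : K) u v, d (c *: u + v) = c *: d u + d v),
      (forall u v, d (u * v) = d u * v + u * d v)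
    & (forall u v, d (br u v) = br (d u) v + br u (d v))].

Definition is_dpois_hom (A B : comAlgType K) (brA : A -> A -> A) (dA : A -> A)
    (brB : B -> B -> B) (dB : B -> B) (h : A -> B) : Prop :=
  [/\ (forall (c : K) u v, h (c *: u + v) = c *: h u + h v),
      h 1 = 1,
      (forall u v, h (u * v) = h u * h v),
      (forall u v, h (brA u v) = brB (h u) (h v))
    & (forall u, h (dA u) = dB (h u))].

Definition is_free_dpois (X : Type) (A : comAlgType K) (br : A -> A -> A)
    (d : A -> A) (f : X -> A) : Prop :=
  is_poisson_bracket br /\ is_poisson_der br d /\
  forall (B : comAlgType K) (brB : B -> B -> B) (dB : B -> B) (g : X -> B),
    is_poisson_bracket brB -> is_poisson_der brB dB ->
    exists h : A -> B, is_dpois_hom br d brB dB h /\ (forall x, h (f x) = g x) /\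
      forall h' : A -> B, is_dpois_hom br d brB dB h' -> (forall x, h' (f x) = g x) ->
        forall u, h' u = h u.

Inductive GD_gen (X : Type) (A : comAlgType K) (br : A -> A -> A) (d : A -> A)
    (f : X -> A) : A -> Prop :=
  | GDg_gen x : GD_gen br d f (f x)
  | GDg_zero : GD_gen br d f 0
  | GDg_add u v : GD_gen br d f u -> GD_gen br d f v -> GD_gen br d f (u + v)
  | GDg_scale (c : K) u : GD_gen br d f u -> GD_gen br d f (c *: u)
  | GDg_br u v : GD_gen br d f u -> GD_gen br d f v -> GD_gen br d f (br u v)
  | GDg_circ u v : GD_gen br d f u -> GD_gen br d f v -> GD_gen br d f (u * d v).
End Defs.

(* Letters d^n(x) of d^omega X, encoded as pairs (n, x), ordered
   lexicographically. *)
Section Words.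
Context {disp : Order.disp_t} {X : orderType disp}.

Definition letter_lt (a b : nat * X) : bool :=
  (a.1 < b.1)%N || ((a.1 == b.1) && (Order.lt a.2 b.2)).

Fixpoint word_lt (u v : seq (nat * X)) : bool :=
  match u, v with
  | [::], [::] => false
  | [::], _ :: _ => true
  | _ :: _, [::] => false
  | a :: u', b :: v' => letter_lt a b || ((a == b) && word_lt u' v')
  end.

(* Lyndon-Shirshov word: U nonempty and U > U2 U1 for every factorization
   U = U1 U2 with U1, U2 nonempty. *)
Definition is_LS (U : seq (nat * X)) : bool :=
  (0 < size U)%N && all (fun i => word_lt (rot i U) U) (iota 1 (size U).-1).

(* Canonical bracketing: [a] = a for a letter; otherwise U = U1 U2 with U2
   the longest proper suffix of U which is a Lyndon-Shirshov word, and
   [U] = {[U1],[U2]}. *)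
Fixpoint LS_bracket_fuel (T : Type) (br : T -> T -> T) (ev : nat * X -> T) (t0 : T)
    (n : nat) (U : seq (nat * X)) : T :=
  match n with
  | 0 => t0
  | n'.+1 =>
    match U with
    | [::] => t0
    | [:: a] => ev a
    | _ =>
      let i := (find (fun j => is_LS (drop j U)) (iota 1 (size U).-1)).+1 in
      br (LS_bracket_fuel br ev t0 n' (take i U)) (LS_bracket_fuel br ev t0 n' (drop i U))
    end
  end.

Definition LS_bracket (T : Type) (br : T -> T -> T) (ev : nat * X -> T) (t0 : T)
    (U : seq (nat * X)) : T :=
  LS_bracket_fuel br ev t0 (size U) U.

Definition Ddeg (U : seq (nat * X)) : nat := sumn (map fst U).
End Words.

(* Main.v *)
Require Import Defs.
From HB Require Import structures.
From mathcomp Require Import all_boot all_order all_algebra.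
From mathcomp Require Import ring.
Import Order.TTheory GRing.Theory.
Local Open Scope ring_scope.

Section Aux.
Variable K : fieldType.
Variable A : comAlgType K.
Variable S : A -> Prop.
Hypothesis S0 : S 0.
Hypothesis Sadd : forall u v, S u -> S v -> S (u + v).
Hypothesis Sopp : forall u, S u -> S (- u).

Lemma Ssub {u v} : S u -> S v -> S (u - v).
Proof. by move=> *; apply: Sadd => //; apply: Sopp. Qed.

Definition G (n : nat) (a : A) : Prop :=
  forall ss : seq A, size ss = n -> (forall s, s \in ss -> S s) ->
    S ((\prod_(s <- ss) s) * a).

Lemma G_cons n a s : S s -> G n.+1 a -> G n (s * a).
Proof.
move=> Hs Ha ss Hsz Hss.
have := Ha (s :: ss); rewrite big_cons /= Hsz => H.
rewrite mulrCA mulrA; apply: H => // x; rewrite in_cons => /orP [/eqP -> //|].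
exact: Hss.
Qed.

Lemma G0 n : G n 0.
Proof. by move=> ss _ _; rewrite mulr0. Qed.

Lemma Gen (c : A) (delta : A -> A)
  (hdel : forall u v, delta (u * v) = delta u * v + u * delta v)
  (hc : forall s, S s -> S (c * delta s)) :
  forall ss, (forall s, s \in ss -> S s) -> forall a, G (size ss) a ->
    S (c * delta (\prod_(s <- ss) s) * a).
Proof.
have d1 : delta 1 = 0.
  have := hdel 1 1; rewrite !mul1r mulr1 => h.
  have : delta 1 + 0 = delta 1 + delta 1 by rewrite addr0.
  by move/addrI => <-.
elim=> [|s1 ss IH] Hss a Ha.
  by rewrite big_nil d1 mulr0 mul0r.
have Hs1 : S s1 by apply: Hss; rewrite mem_head.
have Hss' : forall s, s \in ss -> S s.
  by move=> s hs; apply: Hss; rewrite in_cons hs orbT.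
rewrite big_cons hdel mulrDr mulrDl; apply: Sadd.
  have := Ha ((c * delta s1) :: ss); rewrite big_cons /= => H.
  rewrite mulrA; apply: H => // x; rewrite in_cons => /orP [/eqP -> |]; last exact: Hss'.
  exact: hc.
have -> : c * (s1 * delta (\prod_(s <- ss) s)) * a =
          c * delta (\prod_(s <- ss) s) * (s1 * a) by ring.
apply: IH => //; exact: G_cons.
Qed.

Variable br : A -> A -> A.
Variable d : A -> A.
Hypothesis Sbr : forall u v, S u -> S v -> S (br u v).
Hypothesis Scirc : forall u v, S u -> S v -> S (u * d v).
Hypothesis brA : forall u v, br u v = - br v u.
Hypothesis brR : forall u v w, br u (v * w) = br u v * w + v * br u w.
Hypothesis dM : forall u v, d (u * v) = d u * v + u * d v.

Lemma brL u v w : br (u * v) w = br u w * v + u * br v w.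
Proof. by rewrite brA brR (brA w u) (brA w v) mulNr mulrN opprD !opprK. Qed.

Lemma G_d n a : G n a -> G n.+1 (d a).
Proof.
move=> Ha [|s0 ss] //= [Hsz] Hss.
rewrite big_cons.
have Hs0 : S s0 by apply: Hss; rewrite mem_head.
have Hss' : forall s, s \in ss -> S s.
  by move=> s hs; apply: Hss; rewrite in_cons hs orbT.
have H1 : S (s0 * d (\prod_(s <- ss) s * a)) by apply: Scirc => //; apply: Ha.
rewrite dM mulrDr in H1.
have H2 : S (s0 * d (\prod_(s <- ss) s) * a).
  by apply: (@Gen s0 d dM) => //; [move=> s hs; exact: Scirc | rewrite Hsz].
have HH := Ssub H1 H2.
suff E : s0 * (\prod_(s <- ss) s) * d a =   s0 * (d (\prod_(s <- ss) s) * a) + s0 * (\prod_(s <- ss) s * d a)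
   - s0 * d (\prod_(s <- ss) s) * a by rewrite E.
ring.
Qed.

Lemma G_brs n a s : S s -> G n a -> G n (br a s).
Proof.
move=> Hs Ha ss Hsz Hss.
have H1 : S (br (\prod_(x <- ss) x * a) s) by apply: Sbr => //; apply: Ha.
rewrite brL in H1.
have H2 : S (1 * br (\prod_(x <- ss) x) s * a).
  apply: (@Gen 1 (fun u => br u s)) => //; first by move=> ? ?; exact: brL.
    by move=> x hx; rewrite mul1r; apply: Sbr.
  by rewrite Hsz.
rewrite mul1r in H2.
have HH := Ssub H1 H2.
suff E : \prod_(x <- ss) x * br a s =   br (\prod_(x <- ss) x) s * a + \prod_(x <- ss) x * br a s
   - br (\prod_(x <- ss) x) s * a by rewrite E.
ring.
Qed.

Lemma G_br n m a b : G n a -> G m b -> G (n + m) (br a b).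
Proof.
move=> Ha Hb ss Hsz Hss.
rewrite -(cat_take_drop n ss) big_cat /=.
set s1 := take n ss; set s2 := drop n ss.
have Hsz1 : size s1 = n by rewrite size_takel // Hsz leq_addr.
have Hsz2 : size s2 = m by rewrite size_drop Hsz addKn.
have Hs1 : forall s, s \in s1 -> S s by move=> s hs; apply: Hss; exact: mem_take hs.
have Hs2 : forall s, s \in s2 -> S s by move=> s hs; apply: Hss; exact: mem_drop hs.
set P1 := \prod_(s <- s1) s; set P2 := \prod_(s <- s2) s.
have Hq : S (P2 * b) by apply: Hb.
have Hp : S (P1 * a) by apply: Ha.
have H1 := Sbr _ _ Hp Hq.
rewrite brL (brR a) in H1.
have H2 : S (1 * br P1 (P2 * b) * a).
  apply: (@Gen 1 (fun u => br u (P2 * b))) => //; first by move=> ? ?; exact: brL.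
    by move=> x hx; rewrite mul1r; apply: Sbr.
  by rewrite Hsz1.
rewrite mul1r in H2.
have H3 : S (P1 * br P2 a * b).
  apply: (@Gen P1 (fun u => br u a)) => //; first by move=> ? ?; exact: brL.
    move=> x hx; rewrite brA mulrN; apply: Sopp.
    exact: (G_brs _ _ _ hx Ha s1 Hsz1 Hs1).
  by rewrite Hsz2.
have HH := Ssub (Sadd _ _ H1 H3) H2.
suff E : P1 * P2 * br a b =    br P1 (P2 * b) * a + P1 * (br a P2 * b + P2 * br a b) + P1 * br P2 a * b
   - br P1 (P2 * b) * a by rewrite E.
rewrite (brA a P2); ring.
Qed.

End Aux.

Theorem mainTheorem15 (K : fieldType) (charK0 : [pchar K] =i pred0)
    (disp : Order.disp_t) (X : orderType disp)
    (A : comAlgType K) (br : A -> A -> A) (d : A -> A) (f : X -> A)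
    (hfree : is_free_dpois br d f)
    (xs : seq X) (U : seq (nat * X))
    (hU : is_LS U) (hD : Ddeg U = size xs) :
  GD_gen br d f
    ((\prod_(x <- xs) f x) * LS_bracket br (fun a => iter a.1 d (f a.2)) 0 U).
Proof.
move: hfree => [hpb [hpd _]]; case: hpb => _ brA _ brR; case: hpd => _ dM _.
set S := GD_gen br d f.
have S0 : S 0 by exact: GDg_zero.
have Sadd : forall u v, S u -> S v -> S (u + v) by move=> *; exact: GDg_add.
have Sopp : forall u, S u -> S (- u).
  by move=> u hu; rewrite -scaleN1r; exact: GDg_scale.
have Sbr : forall u v, S u -> S v -> S (br u v) by move=> *; exact: GDg_br.
have Scirc : forall u v, S u -> S v -> S (u * d v) by move=> *; exact: GDg_circ.
have Gl : forall a : nat * X, G K A S a.1 (iter a.1 d (f a.2)).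
  case=> k x /=; elim: k => [|k IH].
    by case=> //= _ _; rewrite big_nil mul1r; exact: GDg_gen.
  exact: (G_d _ _ _ S0 Sadd Sopp _ Scirc dM _ _ IH).
have Gf : forall n (V : seq (nat * X)),
    G K A S (Ddeg V) (LS_bracket_fuel br (fun a => iter a.1 d (f a.2)) 0 n V).
  elim=> [|n IH] V /=; first exact: (G0 _ _ _ S0).
  case: V => [|a [|b V]]; first exact: (G0 _ _ _ S0).
    by rewrite /Ddeg /= addn0; exact: Gl.
  set W := a :: b :: V.
  set i := (find _ _).+1.
  have -> : Ddeg W = (Ddeg (take i W) + Ddeg (drop i W))%N.
    by rewrite /Ddeg -sumn_cat -map_cat cat_take_drop.
  exact: (G_br _ _ _ S0 Sadd Sopp _ Sbr brA brR _ _ _ _ (IH _) (IH _)).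
have := Gf (size U) U; rewrite hD => HG.
rewrite -(big_map f predT id).
apply: HG; first by rewrite size_map.
move=> s /mapP [x _ ->]; exact: GDg_gen.
Qed.
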